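(* Let $X$ be a $*$-bimodule for a unital complex $*$-algebra $A$, let $F$ be a hermitian linear functional on $X$ (i.e. $F(x^+)=\overline{F(x)}$) and let $f$ be a positive linear functional on $A$. Suppose that for each $x\in X$ there is a constant $C_x>0$ such that $$|F(a^+\cdot x)|^2\le C_x\, f(a^+a)\quad\text{for all } a\in A.$$ Let $\rho_f$ be the GNS representation of $f$ on $\mathcal{D}_f$ with cyclic vector $\varphi_f$. Then there exists a $*$-representation $(\theta_F,\rho_f)$ of the $*$-bimodule $X$ on $\mathcal{D}_f$ such that $$F(a\cdot x\cdot b)=\langle\theta_F(x)\rho_f(b)\varphi_f,\rho_f(a^+)\varphi_f\rangle\quad\text{for all } a,b\in A,\ x\in X.$$ Moreover, if $(\theta,\rho)$ is another $*$-representation of $X$ on a complex inner product space $(\mathcal{D},(\cdot,\cdot))$ with Hilbert space completion $\mathcal{H}$ and $\psi\in\mathcal{D}$ satisfies $\rho(A)\psi=\mathcal{D}$, $f(a)=(\rho(a)\psi,\psi)$ for $a\in A$, and $F(a\cdot x\cdot b)=(\theta(x)\rho(b)\psi,\rho(a^+)\psi)$ for all $a,b\in A$, $x\in X$, then there is a unitary operator $U:\mathcal{H}_f\to\mathcal{H}$ with $U\varphi_f=\psi$, $U\mathcal{D}_f=\mathcal{D}$, $\rho(a)=U\rho_f(a)U^{-1}$ and $\theta(x)=U\theta_F(x)U^{-1}$ for all $a\in A$, $x\in X$.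
   Context: A $*$-bimodule $X$ for $A$: a complex $A$-bimodule (unital left and right $A$-module with $(a\cdot x)\cdot b=a\cdot(x\cdot b)$) with conjugate-linear involution $x\mapsto x^+$, $(x^+)^+=x$, satisfying $(a\cdot x\cdot b)^+=b^+\cdot x^+\cdot a^+$. For a complex inner product space $\mathcal{D}$ with completion $\mathcal{H}$, $\mathcal{L}^+(\mathcal{D},\mathcal{H})$ is the set of linear operators $t:\mathcal{D}\to\mathcal{H}$ with $\mathcal{D}(t^* )\supseteq\mathcal{D}$, $t^+:=t^*|_{\mathcal{D}}$. A $*$-representation of $A$ on $\mathcal{D}$ is an algebra homomorphism $\rho$ into linear operators on $\mathcal{D}$ with $\langle\rho(a)\varphi,\psi\rangle=\langle\varphi,\rho(a^+)\psi\rangle$, nondegenerate if $\rho(1)=I$. A $*$-representation of $X$ on $\mathcal{D}$ is a pair $(\theta,\rho)$ with $\rho$ a nondegenerate $*$-representation of $A$ on $\mathcal{D}$ and $\theta:X\to\mathcal{L}^+(\mathcal{D},\mathcal{H})$ linear with $\theta(x^+)=\theta(x)^+$ and $\langle\theta(a\cdot x\cdot b)\varphi,\psi\rangle=\langle\theta(x)\rho(b)\varphi,\rho(a^+)\psi\rangle$ for all $a,b\in A$, $x\in X$, $\varphi,\psi\in\mathcal{D}$. GNS representation of a positive functional $f$ (i.e. $f(a^+a)\ge0$): $\mathcal{N}_f=\{a\in A: f(a^+a)=0\}$, $\mathcal{D}_f=A/\mathcal{N}_f$ with inner product $\langle a+\mathcal{N}_f,b+\mathcal{N}_f\rangle=f(b^+a)$,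 $\rho_f(a)(b+\mathcal{N}_f)=ab+\mathcal{N}_f$, $\varphi_f=1+\mathcal{N}_f$ (so $\mathcal{D}_f=\rho_f(A)\varphi_f$ and $f(a^+b)=\langle\rho_f(b)\varphi_f,\rho_f(a)\varphi_f\rangle$); $\mathcal{H}_f$ is the completion of $\mathcal{D}_f$. *)

(* Defs.v *)
From HB Require Import structures.
From mathcomp Require Import all_boot all_order all_algebra.
From mathcomp Require Import reals complex.
Set Implicit Arguments. Unset Strict Implicit. Unset Printing Implicit Defensive.
Import Order.TTheory GRing.Theory Num.Theory.
Local Open Scope ring_scope.

Section Defs.
Variable R : realType.
Local Notation C := (complex R).

Record star_algebra (A : algType C) (st : A -> A) : Prop := {
  st_conjlin : forall (c : C) (a b : A), st (c *: a + b) = c^* *: st a + st b;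
  st_invol   : forall a, st (st a) = a;
  st_mul     : forall a b, st (a * b) = st b * st a }.

(* lact a x = a . x , ract x b = x . b , xst x = x^+ *)
Record star_bimodule (A : algType C) (st : A -> A) (X : lmodType C)
    (lact : A -> X -> X) (ract : X -> A -> X) (xst : X -> X) : Prop := {
  lact_linA : forall (c : C) a b x, lact (c *: a + b) x = c *: lact a x + lact b x;
  lact_linX : forall (c : C) a x y, lact a (c *: x + y) = c *: lact a x + lact a y;
  ract_linA : forall (c : C) a b x, ract x (c *: a + b) = c *: ract x a + ract x b;
  ract_linX : forall (c : C) a x y, ract (c *: x + y) a = c *: ract x a + ract y a;
  lact1     : forall x, lact 1 x = x;
  ract1     : forall x, ract x 1 = x;
  lactM     : forall a b x, lact (a * b) x = lact a (lact b x);
  ractM     : forall a b x, ract x (a * b) = ract (ract x a) b;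
  lractA    : forall a b x, ract (lact a x) b = lact a (ract x b);
  xst_conjlin : forall (c : C) x y, xst (c *: x + y) = c^* *: xst x + xst y;
  xst_invol : forall x, xst (xst x) = x;
  xst_act   : forall a b x,
      xst (ract (lact a x) b) = ract (lact (st b) (xst x)) (st a) }.

(* squared distance ||x - y||^2 for an inner product ip (linear in the first
   argument, conjugate-linear in the second) *)
Definition sqdist (H : lmodType C) (ip : H -> H -> C) (x y : H) : C :=
  ip (x - y) (x - y).

Definition cauchy_seq (H : lmodType C) (ip : H -> H -> C) (u : nat -> H) :=
  forall e : C, 0 < e -> exists N : nat,
    forall m n, (N <= m)%N -> (N <= n)%N -> sqdist ip (u m) (u n) < e.

Definition converges_to (H : lmodType C) (ip : H -> H -> C) (u : nat -> H) (l : H) :=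
  forall e : C, 0 < e -> exists N : nat,
    forall n, (N <= n)%N -> sqdist ip (u n) l < e.

Record hilbert (H : lmodType C) (ip : H -> H -> C) : Prop := {
  ip_linl     : forall (c : C) x y z, ip (c *: x + y) z = c * ip x z + ip y z;
  ip_conjsym  : forall x y, ip y x = (ip x y)^*;
  ip_ge0      : forall x, 0 <= ip x x;
  ip_eq0      : forall x, ip x x = 0 -> x = 0;
  ip_complete : forall u : nat -> H, cauchy_seq ip u ->
                  exists l, converges_to ip u l }.

(* D is a dense linear subspace of the Hilbert space (H, ip); a complex inner
   product space D together with its Hilbert space completion H is modelled
   as such a pair (D with the restricted inner product). *)
Record dense_subspace (H : lmodType C) (ip : H -> H -> C) (D : H -> Prop) : Prop := {
  ds0     : D 0;
  dslin   : forall (c : C) x y, D x -> D y -> D (c *: x + y);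
  dsdense : forall (h : H) (e : C), 0 < e -> exists d, D d /\ sqdist ip h d < e }.

(* operators D -> H (values outside D are irrelevant) *)
Definition linear_on (H : lmodType C) (D : H -> Prop) (t : H -> H) :=
  forall (c : C) x y, D x -> D y -> t (c *: x + y) = c *: t x + t y.

(* t is in L^+(D,H): t : D -> H linear and D is contained in the domain of the
   Hilbert space adjoint t^*, i.e. for every psi in D there is t^* psi in H with
   <t phi, psi> = <phi, t^* psi> for all phi in D. *)
Definition Lplus (H : lmodType C) (ip : H -> H -> C) (D : H -> Prop) (t : H -> H) :=
  linear_on D t /\
  exists s : H -> H, forall phi psi, D phi -> D psi -> ip (t phi) psi = ip phi (s psi).

Record star_rep (A : algType C) (st : A -> A)
    (H : lmodType C) (ip : H -> H -> C) (D : H -> Prop) (rho : A -> H -> H) : Prop := {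
  rep_stable : forall a phi, D phi -> D (rho a phi);
  rep_linop  : forall a, linear_on D (rho a);
  rep_linA   : forall (c : C) a b phi, D phi -> rho (c *: a + b) phi = c *: rho a phi + rho b phi;
  rep_mul    : forall a b phi, D phi -> rho (a * b) phi = rho a (rho b phi);
  rep_star   : forall a phi psi, D phi -> D psi -> ip (rho a phi) psi = ip phi (rho (st a) psi);
  rep_nondeg : forall phi, D phi -> rho 1 phi = phi }.

Record bimod_rep (A : algType C) (st : A -> A) (X : lmodType C)
    (lact : A -> X -> X) (ract : X -> A -> X) (xst : X -> X)
    (H : lmodType C) (ip : H -> H -> C) (D : H -> Prop)
    (theta : X -> H -> H) (rho : A -> H -> H) : Prop := {
  brep_rho   : star_rep st ip D rho;
  brep_Lplus : forall x, Lplus ip D (theta x);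
  brep_lin   : forall (c : C) x y phi, D phi ->
                 theta (c *: x + y) phi = c *: theta x phi + theta y phi;
  brep_star  : forall x phi psi, D phi -> D psi ->
                 ip (theta x phi) psi = ip phi (theta (xst x) psi);
  brep_mod   : forall a b x phi psi, D phi -> D psi ->
                 ip (theta (ract (lact a x) b) phi) psi = ip (theta x (rho b phi)) (rho (st a) psi) }.

(* (Hf, ipf) is the Hilbert space completion of D_f = A / N_f, where pi is the
   quotient map A -> A/N_f composed with the embedding into Hf:
   <pi a, pi b> = f(b^+ a), and pi(A) = D_f is dense;
   rhof is the GNS representation rho_f(a)(b + N_f) = ab + N_f. *)
Record GNS (A : algType C) (st : A -> A) (f : A -> C)
    (Hf : lmodType C) (ipf : Hf -> Hf -> C) (pi : A -> Hf) (rhof : A -> Hf -> Hf) : Prop := {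
  gns_hilbert : hilbert ipf;
  gns_lin     : forall (c : C) a b, pi (c *: a + b) = c *: pi a + pi b;
  gns_ip      : forall a b, ipf (pi a) (pi b) = f (st b * a);
  gns_dense   : forall (h : Hf) (e : C), 0 < e -> exists a, sqdist ipf h (pi a) < e;
  gns_rho     : forall a b, rhof a (pi b) = pi (a * b) }.

Definition GNS_domain (A : algType C) (Hf : lmodType C) (pi : A -> Hf) : Hf -> Prop :=
  fun h => exists a, h = pi a.

Record unitary (H1 H2 : lmodType C) (ip1 : H1 -> H1 -> C) (ip2 : H2 -> H2 -> C)
    (U : H1 -> H2) : Prop := {
  un_lin  : forall (c : C) x y, U (c *: x + y) = c *: U x + U y;
  un_isom : forall x y, ip2 (U x) (U y) = ip1 x y;
  un_surj : forall y, exists x, U x = y }.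

End Defs.

(* Main.v *)
Require Import Defs.
From HB Require Import structures.
From mathcomp Require Import all_boot all_order all_algebra.
From mathcomp Require Import reals complex.
From mathcomp Require Import ring lra.
From mathcomp Require Import classical_sets.
Import Order.TTheory GRing.Theory Num.Theory.
Local Open Scope ring_scope.
Set Implicit Arguments. Unset Strict Implicit. Unset Printing Implicit Defensive.

Notation re := complex.Re.
Notation im := complex.Im.

Section Cx.
Variable R : realType.
Local Notation C := (complex R).
Implicit Types x y z : C.
Lemma ReD x y : re (x + y) = re x + re y. Proof. by case: x => a b; case: y => c d. Qed.
Lemma ImD x y : im (x + y) = im x + im y. Proof. by case: x => a b; case: y => c d. Qed.
Lemma ReN x : re (- x) = - re x. Proof. by case: x => a b. Qed.
Lemma ImN x : im (- x) = - im x. Proof. by case: x => a b. Qed.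
Lemma ReB x y : re (x - y) = re x - re y. Proof. by case: x => a b; case: y => c d. Qed.
Lemma ImB x y : im (x - y) = im x - im y. Proof. by case: x => a b; case: y => c d. Qed.
Lemma ReM x y : re (x * y) = re x * re y - im x * im y. Proof. by case: x => a b; case: y => c d. Qed.
Lemma ImM x y : im (x * y) = re x * im y + im x * re y. Proof. by case: x => a b; case: y => c d /=. Qed.
Lemma ReJ x : re (x^*) = re x. Proof. by case: x => a b. Qed.
Lemma ImJ x : im (x^*) = - im x. Proof. by case: x => a b. Qed.
Lemma ReR (r : R) : re (r%:C)%C = r. Proof. by []. Qed.
Lemma ImR (r : R) : im (r%:C)%C = 0. Proof. by []. Qed.
Lemma Re0 : re (0 : C) = 0. Proof. by []. Qed.
Lemma Im0 : im (0 : C) = 0. Proof. by []. Qed.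
Lemma Re1 : re (1 : C) = 1. Proof. by []. Qed.
Lemma Im1 : im (1 : C) = 0. Proof. by []. Qed.
Lemma cplx_eq x y : re x = re y -> im x = im y -> x = y.
Proof. by case: x => a b; case: y => c d /= -> ->. Qed.
Lemma cplx_le x y : (x <= y) = (im y == im x) && (re x <= re y).
Proof. exact: lecE. Qed.
Lemma cplx_lt x y : (x < y) = (im y == im x) && (re x < re y).
Proof. exact: ltcE. Qed.
Lemma normc2 x : `|x| ^+ 2 = ((re x)^+2 + (im x)^+2)%:C%C.
Proof. by rewrite add_Re2_Im2. Qed.
Lemma conjJ x : x^*^* = x. Proof. by case: x => a b; apply: cplx_eq => //=; rewrite opprK. Qed.
End Cx.

Ltac cx := rewrite ?(ReD, ImD, ReN, ImN, ReB, ImB, ReM, ImM, ReJ, ImJ, ReR, ImR, Re0, Im0, Re1, Im1).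

From Stdlib Require Import ClassicalEpsilon.

Lemma choice_fun (X Y : Type) (P : X -> Y -> Prop) :
  (forall x, exists y, P x y) -> exists f : X -> Y, forall x, P x (f x).
Proof.
move=> h; exists (fun x => proj1_sig (constructive_indefinite_description _ (h x))).
by move=> x; case: (constructive_indefinite_description _ (h x)).
Qed.

Section Eps.
Variable R : realType.
Definition epsn (k : nat) : R := (k.+1%:R)^-1.
Lemma epsn_gt0 k : 0 < epsn k.
Proof. by rewrite invr_gt0 ltr0Sn. Qed.
Lemma epsn_le j k : (j <= k)%N -> epsn k <= epsn j.
Proof.
move=> jk; rewrite /epsn lef_pV2 ?posrE ?ltr0Sn // ler_nat; by [].
Qed.
Lemma epsn_small (e : R) : 0 < e -> exists N, forall k, (N <= k)%N -> epsn k < e.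
Proof.
move=> e0; exists (Num.truncn (e^-1)) => k hk.
apply: (le_lt_trans (epsn_le hk)).
by rewrite /epsn invf_plt ?posrE ?ltr0Sn // truncnS_gt.
Qed.
End Eps.


Section Hilb.
Variable R : realType.
Local Notation C := (complex R).
Variable H : lmodType C.
Variable ip : H -> H -> C.
Hypothesis Hh : hilbert ip.

Definition nrm (x : H) : R := re (ip x x).

Lemma ip0l z : ip 0 z = 0.
Proof.
have := ip_linl Hh 1 0 0 z; rewrite scaler0 addr0 mul1r => h.
by move/(congr1 (fun t => t - ip 0 z)): h; rewrite subrr addrK.
Qed.
Lemma ipDl x y z : ip (x + y) z = ip x z + ip y z.
Proof. by have := ip_linl Hh 1 x y z; rewrite scale1r mul1r. Qed.
Lemma ipZl c x z : ip (c *: x) z = c * ip x z.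
Proof. by have := ip_linl Hh c x 0 z; rewrite addr0 ip0l addr0. Qed.
Lemma ipNl x z : ip (- x) z = - ip x z.
Proof. by rewrite -scaleN1r ipZl mulN1r. Qed.
Lemma ipBl x y z : ip (x - y) z = ip x z - ip y z.
Proof. by rewrite ipDl ipNl. Qed.
Lemma ipDr x y z : ip z (x + y) = ip z x + ip z y.
Proof. by rewrite !(ip_conjsym Hh _ z) ipDl rmorphD. Qed.
Lemma ipZr c x z : ip z (c *: x) = c^* * ip z x.
Proof. by rewrite !(ip_conjsym Hh _ z) ipZl rmorphM. Qed.
Lemma ip0r z : ip z 0 = 0.
Proof. by rewrite (ip_conjsym Hh) ip0l rmorph0. Qed.
Lemma ipNr x z : ip z (- x) = - ip z x.
Proof. by rewrite !(ip_conjsym Hh _ z) ipNl rmorphN. Qed.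
Lemma ipBr x y z : ip z (x - y) = ip z x - ip z y.
Proof. by rewrite ipDr ipNr. Qed.

Lemma ip_self x : ip x x = (nrm x)%:C%C.
Proof.
have := ip_ge0 Hh x; rewrite cplx_le => /andP[/eqP h _].
by apply: cplx_eq => //=; rewrite -h.
Qed.
Lemma nrm_ge0 x : 0 <= nrm x.
Proof. by have := ip_ge0 Hh x; rewrite cplx_le => /andP[_]. Qed.
Lemma nrm0 x : nrm x = 0 -> x = 0.
Proof. by move=> h; apply: (ip_eq0 Hh); rewrite ip_self h. Qed.
Lemma ip_swap x y : ip y x = (ip x y)^*.
Proof. exact: (ip_conjsym Hh). Qed.

Lemma nrm_expand x y c :
  nrm (x + c *: y) = nrm x + 2 * (re c * re (ip x y) + im c * im (ip x y))
     + (re c ^+ 2 + im c ^+ 2) * nrm y.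
Proof.
rewrite /nrm !(ipDl, ipDr, ipZl, ipZr) (ip_swap x y) !ip_self.
move: (ip x y) => z; cx; ring.
Qed.


Lemma nrmZ c w : nrm (c *: w) = (re c ^+ 2 + im c ^+ 2) * nrm w.
Proof. by have := nrm_expand 0 w c; rewrite add0r ip0l /nrm ip0l; cx; move=> ->; ring. Qed.

Lemma nrmN w : nrm (- w) = nrm w.
Proof. by rewrite -scaleN1r nrmZ; cx; rewrite /=; ring. Qed.

Lemma parallelogram x y : nrm (x + y) + nrm (x - y) = 2 * nrm x + 2 * nrm y.
Proof.
have h1 := nrm_expand x y 1; have h2 := nrm_expand x y (-1).
rewrite scale1r in h1; rewrite scaleN1r in h2; rewrite h1 h2; cx; rewrite /=; ring.
Qed.

Lemma nrmD_le x y : nrm (x + y) <= 2 * nrm x + 2 * nrm y.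
Proof. have := parallelogram x y; have := nrm_ge0 (x - y); lra. Qed.

Lemma nrmB_le x y : nrm (x - y) <= 2 * nrm x + 2 * nrm y.
Proof. by have := nrmD_le x (- y); rewrite nrmN. Qed.

Lemma CS x y : re (ip x y) ^+ 2 + im (ip x y) ^+ 2 <= nrm x * nrm y.
Proof.
have [y0|ny] := eqVneq y 0.
  by rewrite y0 ip0r; cx; rewrite expr0n /= addr0 /nrm ip0r; cx; rewrite mulr0.
have npos : 0 < nrm y.
  by rewrite lt_def nrm_ge0 andbT; apply/eqP => /nrm0 /eqP; rewrite (negbTE ny).
set n := nrm y; set t := n^-1.
have tn : t * n = 1 by rewrite mulVf // gt_eqF.
have tpos : 0 < t by rewrite invr_gt0.
set a := re (ip x y); set b := im (ip x y).
have := nrm_expand x y (Complex (- a * t) (- b * t)); rewrite -/a -/b -/n /= => e.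
have := nrm_ge0 (x + Complex (- a * t) (- b * t) *: y); rewrite e => h.
have h2 : 0 <= nrm x - (a ^+ 2 + b ^+ 2) * t.
  have -> : nrm x - (a ^+ 2 + b ^+ 2) * t =
    nrm x + 2 * (- a * t * a + - b * t * b) + ((- a * t) ^+ 2 + (- b * t) ^+ 2) * n.
    apply/eqP; rewrite -subr_eq0.
    have -> : nrm x - (a ^+ 2 + b ^+ 2) * t -
      (nrm x + 2 * (- a * t * a + - b * t * b) + ((- a * t) ^+ 2 + (- b * t) ^+ 2) * n)
      = - ((a ^+ 2 + b ^+ 2) * t * (t * n - 1)) by ring.
    by rewrite tn subrr mulr0 oppr0.
  done.
have : 0 <= (nrm x - (a ^+ 2 + b ^+ 2) * t) * n by rewrite mulr_ge0 // ltW.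
rewrite mulrBl -mulrA tn mulr1 subr_ge0 mulrC. done.
Qed.


Definition dense_img (T : Type) (p : T -> H) :=
  forall h (e : R), 0 < e -> exists a, nrm (h - p a) < e.

Lemma nrm_0 : nrm 0 = 0.
Proof. by rewrite /nrm ip0l. Qed.

Lemma uniq0 T (p : T -> H) : dense_img p -> forall v, (forall a, ip (p a) v = 0) -> v = 0.
Proof.
move=> dp v hv; have [/nrm0 //|nz] := eqVneq (nrm v) 0.
have np : 0 < nrm v by rewrite lt_def nz nrm_ge0.
have [a ha] := dp v (nrm v / 2) (divr_gt0 np (ltr0Sn _ 1)).
have e : ip v v = ip (v - p a) v by rewrite ipBl hv subr0.
have := CS (v - p a) v; rewrite -e ip_self /=; cx => h.
have hd := nrm_ge0 (v - p a); exfalso; nra.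
Qed.

Lemma uniq_eq T (p : T -> H) : dense_img p -> forall v w,
  (forall a, ip (p a) v = ip (p a) w) -> v = w.
Proof.
move=> dp v w h; apply/eqP; rewrite -subr_eq0; apply/eqP; apply: (uniq0 dp) => a.
by rewrite ipBr h subrr.
Qed.

Lemma riesz_bound T (p : T -> H) (L : T -> C) (M : R) xi : dense_img p -> 0 <= M ->
  (forall a, re (L a) ^+ 2 + im (L a) ^+ 2 <= M * nrm (p a)) ->
  (forall a, ip (p a) xi = L a) -> nrm xi <= 7 * M.
Proof.
move=> dp M0 hb hL; have [Me0|Mnz] := eqVneq M 0.
  have -> : xi = 0.
    apply: (uniq0 dp) => a; rewrite hL; have := hb a; rewrite Me0 mul0r => h.
    apply: cplx_eq; cx; nra.
  by rewrite nrm_0 Me0 mulr0.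
have Mp : 0 < M by rewrite lt_def Mnz M0.
have [a ha] := dp xi M Mp.
have e : ip xi xi = ip (xi - p a) xi + L a by rewrite ipBl hL subrK.
have h1 := CS (xi - p a) xi.
have h2 := hb a.
have h3 := nrmB_le xi (xi - p a).
have epa : xi - (xi - p a) = p a by rewrite opprB addrCA subrr addr0.
rewrite epa in h3.
have eN : nrm xi = re (ip (xi - p a) xi) + re (L a) by rewrite /nrm e; cx.
move: ha h1 h2 h3 eN; set d := nrm (xi - p a); set N := nrm xi; set q := nrm (p a).
set r1 := re (ip (xi - p a) xi); set i1 := im _; set r2 := re (L a); set i2 := im _.
move=> ha h1 h2 h3 eN.
have d0 : 0 <= d := nrm_ge0 _. have N0 : 0 <= N := nrm_ge0 _.
have s1 : r1 ^+ 2 <= M * N by nra.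
have s2 : r2 ^+ 2 <= M * (2 * N + 2 * M).
  have : M * q <= M * (2 * N + 2 * M) by apply: ler_wpM2l => //; lra.
  have := sqr_ge0 i2; lra.
have s3 : N ^+ 2 <= 6 * M * N + 4 * M ^+ 2.
  have e1 : N ^+ 2 = 2 * r1 ^+ 2 + 2 * r2 ^+ 2 - (r1 - r2) ^+ 2 by rewrite eN; ring.
  have := sqr_ge0 (r1 - r2); lra.
rewrite leNgt; apply/negP => hN.
have : 7 * M * N < N ^+ 2 by rewrite expr2 ltr_pM2r; lra.
have : 7 * M * (7 * M) <= 7 * M * N by rewrite ler_wpM2l //; lra.
nra.
Qed.

Lemma sqdist_nrm x y : sqdist ip x y = (nrm (x - y))%:C%C.
Proof. by rewrite /sqdist ip_self. Qed.

Section Riesz.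
Variable T : lmodType C.
Variable p : T -> H.
Variable L : T -> C.
Variable M : R.
Hypothesis plin : forall c a b, p (c *: a + b) = c *: p a + p b.
Hypothesis Llin : forall c a b, L (c *: a + b) = c * L a + L b.
Hypothesis dp : dense_img p.
Hypothesis M0 : 0 <= M.
Hypothesis hb : forall a, re (L a) ^+ 2 + im (L a) ^+ 2 <= M * nrm (p a).

Lemma p0 : p 0 = 0.
Proof.
have := plin 1 0 0; rewrite scaler0 addr0 scale1r => h.
by move/(congr1 (fun t => t - p 0)): h; rewrite subrr addrK.
Qed.
Lemma pD a b : p (a + b) = p a + p b.
Proof. by have := plin 1 a b; rewrite !scale1r. Qed.
Lemma pZ c a : p (c *: a) = c *: p a.
Proof. by have := plin c a 0; rewrite !addr0 p0 addr0. Qed.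
Lemma L0 : L 0 = 0.
Proof.
have := Llin 1 0 0; rewrite scaler0 addr0 mul1r => h.
by move/(congr1 (fun t => t - L 0)): h; rewrite subrr addrK.
Qed.
Lemma LD a b : L (a + b) = L a + L b.
Proof. by have := Llin 1 a b; rewrite scale1r mul1r. Qed.
Lemma LZ c a : L (c *: a) = c * L a.
Proof. by have := Llin c a 0; rewrite !addr0 L0 addr0. Qed.

Let J a := nrm (p a) - 2 * re (L a).

Lemma Jlb a : - M <= J a.
Proof.
rewrite /J; have := hb a; have := nrm_ge0 (p a); have := sqr_ge0 (im (L a)).
move: (nrm (p a)) (re (L a)) (im (L a)) => n r i h1 h2 h3.
have h4 : r ^+ 2 <= M * n by lra.
have h5 : (2 * r) ^+ 2 <= (n + M) ^+ 2.
  have e1 : (2 * r) ^+ 2 = 4 * r ^+ 2 by ring.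
  have e2 : (n + M) ^+ 2 = (n - M) ^+ 2 + 4 * (M * n) by ring.
  have := sqr_ge0 (n - M); lra.
have nM : 0 <= n + M by apply: addr_ge0.
have : 2 * r <= n + M.
  rewrite leNgt; apply/negP => hc.
  have : (n + M) ^+ 2 < (2 * r) ^+ 2.
    by rewrite !expr2; apply: (le_lt_trans (y := (n + M) * (2 * r))); [rewrite ler_wpM2l // ltW | rewrite ltr_pM2r //; lra].
  lra.
lra.
Qed.

Lemma riesz : exists xi, forall a, ip (p a) xi = L a.
Proof.
pose S : set R := fun r => exists a, r = J a.
have hS : has_inf S.
  split; first by exists (J 0), 0.
  by exists (- M) => r [a ->]; exact: Jlb.
pose m := inf S.
have mle a : m <= J a by apply: (ge_inf hS.2); exists a.
have : forall k, exists a, J a < m + epsn R k.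
  move=> k; have [e [a ->] he] := inf_adherent (epsn_gt0 R k) hS; by exists a.
case/choice_fun => as_ has_.
pose u k := p (as_ k).
pose h : C := ((2 : R)^-1)%:C%C.
have cauchy i j : nrm (u i - u j) < 2 * epsn R i + 2 * epsn R j.
  have hm := mle (h *: (as_ i + as_ j)).
  have hi := has_ i; have hj := has_ j.
  have par := parallelogram (u i) (u j).
  move: hm hi hj par; rewrite /J pZ LZ pD LD nrmZ /u /h; cx.
  rewrite /= expr0n /= addr0.
  move: (nrm (p (as_ i) + p (as_ j))) (nrm (p (as_ i) - p (as_ j))) => s d.
  move: (nrm (p (as_ i))) (nrm (p (as_ j))) (re (L (as_ i))) (re (L (as_ j))) => ni nj ri rj.
  move: (epsn R i) (epsn R j) => ei ej.
  rewrite mul0r subr0. lra.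
have cs : cauchy_seq ip u.
  move=> e; rewrite cplx_lt /= => /andP[/eqP ie e0].
  have [N hN] := epsn_small (divr_gt0 e0 (ltr0Sn R 3)).
  exists N => i j hi hj; rewrite sqdist_nrm cplx_lt /= -ie eqxx /=.
  have := cauchy i j; have := hN i hi; have := hN j hj.
  move: (epsn R i) (epsn R j) (nrm (u i - u j)) => a b c. lra.
have [xi hxi] := ip_complete Hh cs.
exists xi.
(* Euler-Lagrange *)
have EL : forall b, re (ip (p b) xi) = re (L b).
  move=> b; set w := p b; set nw := nrm w.
  apply/eqP; rewrite -subr_eq0; apply/eqP.
  set dl := re (ip w xi) - re (L b).
  have [//|dnz] := eqVneq dl 0; exfalso.
  have nw0 : 0 <= nw := nrm_ge0 _.
  have nw1 : 0 < nw + 1 by apply: (le_lt_trans nw0); rewrite ltrDl.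
  pose s := (nw + 1)^-1.
  have s1 : s * (nw + 1) = 1 by rewrite mulVf // gt_eqF.
  have s0 : 0 < s by rewrite invr_gt0.
  pose t := - dl * s.
  pose eta := dl ^+ 2 * s.
  have eta0 : 0 < eta by rewrite mulr_gt0 // lt_def sqrf_eq0 dnz sqr_ge0.
  have t0 : t != 0 by rewrite mulf_neq0 ?oppr_eq0 // gt_eqF.
  have tt0 : 0 < t ^+ 2 by rewrite lt_def sqrf_eq0 t0 sqr_ge0.
  pose e' := eta ^+ 2 / (16 * t ^+ 2 * (nw + 1)).
  have den0 : 0 < 16 * t ^+ 2 * (nw + 1) by apply: mulr_gt0 => //; apply: mulr_gt0.
  have e'0 : 0 < e' by rewrite divr_gt0 // exprn_gt0.
  have e'e : e' * (16 * t ^+ 2 * (nw + 1)) = eta ^+ 2 by rewrite mulfVK // gt_eqF.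
  have e'C : (0 : C) < (e'%:C)%C by rewrite ltcR.
  have [N1 hN1] := hxi _ e'C.
  have [N2 hN2] := epsn_small (divr_gt0 eta0 (ltr0Sn R 1)).
  pose k := maxn N1 N2.
  have hk1 := hN1 k (leq_maxl _ _); have hk2 := hN2 k (leq_maxr _ _).
  rewrite sqdist_nrm ltcR in hk1.
  have hJ := mle (as_ k + (t%:C)%C *: b).
  have hJk := has_ k.
  move: hJ; rewrite /J pD LD pZ LZ -/w (nrm_expand _ _ (t%:C)%C); cx; rewrite /= expr0n /= addr0.
  rewrite mul0r addr0 => hJ.
  have cs2 := CS w (u k - xi).
  rewrite ipBr in cs2.
  have ere : re (ip (p (as_ k)) w) = re (ip w (u k)) by rewrite ip_swap ReJ.
  rewrite ere in hJ; move: cs2; cx => cs2.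
  have cs3 : (re (ip w (u k)) - re (ip w xi)) ^+ 2 <= nw * nrm (u k - xi).
    have := sqr_ge0 (im (ip w (u k)) - im (ip w xi)); lra.
  have ewx : re (ip w xi) = dl + re (L b) by rewrite /dl; ring.
  rewrite ewx in cs3.
  have hJk' : J (as_ k) < m + epsn R k by [].
  have dd0 := nrm_ge0 (u k - xi).
  move: hJ hJk' cs3 hk1 hk2 e'e dd0; rewrite /J -/(u k).
  move: (nrm (u k)) (re (L (as_ k))) (re (ip w (u k))) (nrm (u k - xi)) (epsn R k) => nk lk dk dd ek.
  move: (re (L b)) => rb.
  move=> hJ hJk' cs3 hk1 hk2 e'e dd0.
  set dlk := dk - (dl + rb).
  have A1 : 16 * t ^+ 2 * dlk ^+ 2 < eta ^+ 2.
    have : dlk ^+ 2 <= (nw + 1) * dd.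
      apply: (le_trans cs3); rewrite ler_wpM2r //; lra.
    move=> h1.
    have : 16 * t ^+ 2 * dlk ^+ 2 <= 16 * t ^+ 2 * ((nw + 1) * dd).
      by rewrite ler_wpM2l // mulr_ge0 // ltW.
    move=> h2.
    have : 16 * t ^+ 2 * ((nw + 1) * dd) < eta ^+ 2.
      rewrite -e'e (mulrC e') mulrA ltr_pM2l //.
    lra.
  have A2 : 4 * t * dlk < eta.
    have hx : (4 * t * dlk) ^+ 2 < eta ^+ 2.
      by have -> : (4 * t * dlk) ^+ 2 = 16 * t ^+ 2 * dlk ^+ 2 by ring.
    rewrite ltNge; apply/negP => hc.
    have : eta ^+ 2 <= (4 * t * dlk) ^+ 2 by rewrite !expr2; apply: ler_pM => //; apply: ltW.
    by rewrite leNgt hx.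
  have A3 : 2 * t * dl + t ^+ 2 * nw = - eta - dl ^+ 2 * s ^+ 2.
    rewrite /t /eta; apply/eqP; rewrite -subr_eq0; apply/eqP.
    have -> : 2 * (- dl * s) * dl + (- dl * s) ^+ 2 * nw - (- (dl ^+ 2 * s) - dl ^+ 2 * s ^+ 2)
      = dl ^+ 2 * s * (s * (nw + 1) - 1) by ring.
    by rewrite s1 subrr mulr0.
  have A4 : 0 <= dl ^+ 2 * s ^+ 2 by rewrite mulr_ge0 // sqr_ge0.
  have A5 : m <= nk - 2 * lk + 2 * t * (dk - rb) + t ^+ 2 * nw - 0 by lra.
  have A6 : 2 * t * (dk - rb) = 2 * t * dl + 2 * t * dlk by rewrite /dlk; ring.
  lra.
move=> a; apply: cplx_eq; first exact: EL.
have := EL ((Complex 0 1 : C) *: a); rewrite pZ ipZl LZ; cx; rewrite /=.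
by rewrite !mul0r !mul1r !sub0r => /oppr_inj.
Qed.

End Riesz.

End Hilb.



Lemma lin_help (R : realType) (U V : lmodType (complex R)) (g : U -> V) :
  (forall c a b, g (c *: a + b) = c *: g a + g b) ->
  [/\ g 0 = 0, forall a b, g (a + b) = g a + g b, forall c a, g (c *: a) = c *: g a,
      forall a, g (- a) = - g a & forall a b, g (a - b) = g a - g b].
Proof.
move=> h.
have g0 : g 0 = 0.
  have := h 1 0 0; rewrite scaler0 addr0 scale1r => e.
  by move/(congr1 (fun t => t - g 0)): e; rewrite subrr addrK.
have gD a b : g (a + b) = g a + g b by rewrite -[a in LHS]scale1r h scale1r.
have gZ c a : g (c *: a) = c *: g a by rewrite -[c *: a]addr0 h g0 addr0.
have gN a : g (- a) = - g a by rewrite -scaleN1r gZ scaleN1r.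
by split => // a b; rewrite gD gN.
Qed.

Lemma linB (R : realType) (U V : lmodType (complex R)) (g : U -> V) :
  (forall c a b, g (c *: a + b) = c *: g a + g b) -> forall a b, g (a - b) = g a - g b.
Proof. by case/lin_help. Qed.
Lemma linD (R : realType) (U V : lmodType (complex R)) (g : U -> V) :
  (forall c a b, g (c *: a + b) = c *: g a + g b) -> forall a b, g (a + b) = g a + g b.
Proof. by case/lin_help. Qed.
Lemma linZ (R : realType) (U V : lmodType (complex R)) (g : U -> V) :
  (forall c a b, g (c *: a + b) = c *: g a + g b) -> forall c a, g (c *: a) = c *: g a.
Proof. by case/lin_help. Qed.

Lemma small_zero (R : realType) (r K : R) : 0 <= K -> 0 <= r ->
  (forall e, 0 < e -> r <= K * e) -> r = 0.
Proof.
move=> K0 r0 h; apply/eqP; rewrite eq_le r0 andbT; rewrite leNgt; apply/negP => rp.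
have K1 : 0 < K + 1 by apply: (le_lt_trans K0); rewrite ltrDl.
have := h (r / (K + 1)) (divr_gt0 rp K1).
rewrite mulrA ler_pdivlMr // => hh.
have : r * (K + 1) <= r * K by rewrite (mulrC r K).
rewrite mulrDr mulr1 => h2; lra.
Qed.

Section Main.
Variable R : realType.
Local Notation C := (complex R).
Variables (A : algType C) (st : A -> A).
Hypothesis HA : star_algebra st.
Variables (X : lmodType C) (lact : A -> X -> X) (ract : X -> A -> X) (xst : X -> X).
Hypothesis HX : star_bimodule st lact ract xst.
Variable F : X -> C.
Hypothesis HFlin : forall (c : C) x y, F (c *: x + y) = c * F x + F y.
Hypothesis HFherm : forall x, F (xst x) = (F x)^*.
Variable f : A -> C.
Hypothesis Hflin : forall (c : C) a b, f (c *: a + b) = c * f a + f b.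
Hypothesis Hbound : forall x, exists Cx : C, 0 < Cx /\
              forall a, `|F (lact (st a) x)| ^+ 2 <= Cx * f (st a * a).
Variables (Hf : lmodType C) (ipf : Hf -> Hf -> C) (pi : A -> Hf) (rhof : A -> Hf -> Hf).
Hypothesis HGNS : GNS st f ipf pi rhof.

Let Hhf := gns_hilbert HGNS.

Lemma conjK (z : C) : z^*^* = z. Proof. exact: conjJ. Qed.
Lemma conjD (z w : C) : (z + w)^* = z^* + w^*. Proof. by rewrite rmorphD. Qed.
Lemma conjM (z w : C) : (z * w)^* = z^* * w^*. Proof. by rewrite rmorphM. Qed.

Lemma st1 : st 1 = 1.
Proof.
transitivity (st 1 * st (st 1)); first by rewrite (st_invol HA) mulr1.
by rewrite -(st_mul HA) mulr1 (st_invol HA).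
Qed.

Lemma stD a b : st (a + b) = st a + st b.
Proof. by have := st_conjlin HA 1 a b; rewrite scale1r rmorph1 scale1r. Qed.
Lemma st0 : st 0 = 0.
Proof.
have := stD 0 0; rewrite addr0 => h.
by move/(congr1 (fun t => t - st 0)): h; rewrite subrr addrK.
Qed.
Lemma stZ c a : st (c *: a) = c^* *: st a.
Proof. by have := st_conjlin HA c a 0; rewrite !addr0 st0 addr0. Qed.

Lemma Flin0 : F 0 = 0.
Proof.
have := HFlin 1 0 0; rewrite scaler0 addr0 mul1r => h.
by move/(congr1 (fun t => t - F 0)): h; rewrite subrr addrK.
Qed.
Lemma FD x y : F (x + y) = F x + F y.
Proof. by have := HFlin 1 x y; rewrite scale1r mul1r. Qed.
Lemma FZ c x : F (c *: x) = c * F x.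
Proof. by have := HFlin c x 0; rewrite !addr0 Flin0 addr0. Qed.
Lemma FN x : F (- x) = - F x.
Proof. by rewrite -scaleN1r FZ mulN1r. Qed.
Lemma FB x y : F (x - y) = F x - F y.
Proof. by rewrite FD FN. Qed.

Lemma piD a b : pi (a + b) = pi a + pi b.
Proof. by have := gns_lin HGNS 1 a b; rewrite !scale1r. Qed.
Lemma pi0 : pi 0 = 0.
Proof.
have := piD 0 0; rewrite addr0 => h.
by move/(congr1 (fun t => t - pi 0)): h; rewrite subrr addrK.
Qed.
Lemma piZ c a : pi (c *: a) = c *: pi a.
Proof. by have := gns_lin HGNS c a 0; rewrite !addr0 pi0 addr0. Qed.
Lemma piN a : pi (- a) = - pi a.
Proof. by rewrite -[- a]scaleN1r piZ scaleN1r. Qed.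
Lemma piB a b : pi (a - b) = pi a - pi b.
Proof. by rewrite piD piN. Qed.

Lemma dense_pi : dense_img ipf pi.
Proof.
move=> h e e0; have eC : (0 : C) < (e%:C)%C by rewrite ltcR.
have [a ha] := gns_dense HGNS h eC.
by exists a; move: ha; rewrite (sqdist_nrm Hhf) ltcR.
Qed.

Lemma f_nrm a : f (st a * a) = (nrm ipf (pi a))%:C%C.
Proof. by rewrite -(gns_ip HGNS) (ip_self Hhf). Qed.

Lemma bound_real (z K : C) (r : R) : 0 < K -> `|z| ^+ 2 <= K * (r%:C)%C ->
   re z ^+ 2 + im z ^+ 2 <= re K * r.
Proof.
rewrite cplx_lt => /andP[/eqP iK _]; rewrite normc2 cplx_le /=.
by case/andP=> _; cx; rewrite mulr0 subr0.
Qed.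

Lemma Cx_pos (K : C) : 0 < K -> 0 <= re K.
Proof. by rewrite cplx_lt => /andP[_ /ltW]. Qed.

Lemma F_null a x d : pi d = 0 -> F (ract (lact a x) d) = 0.
Proof.
move=> hd.
have e : F (ract (lact a x) d) = (F (lact (st d) (ract (xst x) (st a))))^*.
  by rewrite -(lractA HX) -(xst_act HX) HFherm conjK.
rewrite e; have [K [K0 hK]] := Hbound (ract (xst x) (st a)).
have := hK d; rewrite f_nrm hd (nrm_0 Hhf) => /(bound_real K0); rewrite mulr0.
move: (F _) => z hz.
apply: cplx_eq; rewrite ?ReJ ?ImJ /=; nra.
Qed.

Lemma F_wd a x b b' : pi b = pi b' ->
  F (ract (lact a x) b) = F (ract (lact a x) b').
Proof.
move=> h; apply/eqP; rewrite -subr_eq0; apply/eqP.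
have := F_null a x (d := b - b'); rewrite piB h subrr => /(_ erefl).
by rewrite (linB (fun c u v => ract_linA HX c u v (lact a x))) FB.
Qed.

Lemma stlin (c : C) (a b : A) : st (c *: a + b) = c^* *: st a + st b.
Proof. by have := st_conjlin HA c a b. Qed.

Lemma Fconj_lin x b c a a' :
  (F (ract (lact (st (c *: a + a')) x) b))^* =
  c * (F (ract (lact (st a) x) b))^* + (F (ract (lact (st a') x) b))^*.
Proof.
rewrite stlin (lact_linA HX) (ract_linX HX) HFlin conjD conjM conjK //.
Qed.

Lemma xi_exists x b : exists xi, forall a, ipf (pi a) xi = (F (ract (lact (st a) x) b))^*.
Proof.
have [K [K0 hK]] := Hbound (ract x b).
apply: (riesz Hhf (p := pi) (L := fun a => (F (ract (lact (st a) x) b))^*) (M := re K)).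
- exact: gns_lin HGNS.
- by move=> c a a'; rewrite Fconj_lin.
- exact: Cx_pos K0.
- move=> a; have := hK a; rewrite f_nrm (lractA HX) => /(bound_real K0).
  by rewrite ReJ ImJ sqrrN.
Qed.

Definition thetaF (x : X) (h : Hf) : Hf :=
  epsilon (inhabits 0) (fun xi => forall b, h = pi b ->
     forall a, ipf (pi a) xi = (F (ract (lact (st a) x) b))^*).

Lemma thetaF_spec x b a : ipf (pi a) (thetaF x (pi b)) = (F (ract (lact (st a) x) b))^*.
Proof.
have P : exists xi, forall b', pi b = pi b' ->
     forall a, ipf (pi a) xi = (F (ract (lact (st a) x) b'))^*.
  have [xi hxi] := xi_exists x b; exists xi => b' hb a'.
  by rewrite hxi (F_wd _ _ hb).
exact: (epsilon_spec (inhabits 0) _ P b erefl a).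
Qed.

Lemma thetaF_spec' x b a : ipf (thetaF x (pi b)) (pi a) = F (ract (lact (st a) x) b).
Proof. by rewrite (ip_swap Hhf) thetaF_spec conjK. Qed.

Let Df := GNS_domain pi.

Lemma uniqf v w : (forall a, ipf (pi a) v = ipf (pi a) w) -> v = w.
Proof. exact: (uniq_eq Hhf dense_pi). Qed.

Lemma rhof_star : star_rep st ipf Df rhof.
Proof.
split.
- by move=> a _ [b ->]; rewrite (gns_rho HGNS); exists (a * b).
- move=> a c _ _ [b1 ->] [b2 ->].
  by rewrite -(gns_lin HGNS) !(gns_rho HGNS) mulrDr -scalerAr (gns_lin HGNS).
- move=> c a b _ [d ->].
  by rewrite !(gns_rho HGNS) mulrDl -scalerAl (gns_lin HGNS).
- move=> a b _ [d ->].
  by rewrite !(gns_rho HGNS) mulrA.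
- move=> a _ _ [b ->] [d ->].
  by rewrite !(gns_rho HGNS) !(gns_ip HGNS) (st_mul HA) (st_invol HA) mulrA.
- by move=> _ [b ->]; rewrite (gns_rho HGNS) mul1r.
Qed.

Lemma thetaF_lin_on x : linear_on Df (thetaF x).
Proof.
move=> c _ _ [b1 ->] [b2 ->]; rewrite -(gns_lin HGNS).
apply: uniqf => a.
rewrite thetaF_spec (ipDr Hhf) (ipZr Hhf) !thetaF_spec.
rewrite (ract_linA HX) HFlin conjD conjM //.
Qed.

Lemma thetaF_star x phi psi : Df phi -> Df psi ->
  ipf (thetaF x phi) psi = ipf phi (thetaF (xst x) psi).
Proof.
move=> [b ->] [a ->]; rewrite thetaF_spec' thetaF_spec.
by rewrite -HFherm (xst_act HX) (st_invol HA) (xst_invol HX).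
Qed.

Lemma thetaF_xlin c x y phi : Df phi ->
  thetaF (c *: x + y) phi = c *: thetaF x phi + thetaF y phi.
Proof.
move=> [b ->]; apply: uniqf => a.
rewrite thetaF_spec (ipDr Hhf) (ipZr Hhf) !thetaF_spec.
by rewrite (lact_linX HX) (ract_linX HX) HFlin conjD conjM.
Qed.

Lemma thetaF_mod a b x phi psi : Df phi -> Df psi ->
  ipf (thetaF (ract (lact a x) b) phi) psi = ipf (thetaF x (rhof b phi)) (rhof (st a) psi).
Proof.
move=> [c ->] [d ->]; rewrite !(gns_rho HGNS) !thetaF_spec'.
rewrite (st_mul HA) (st_invol HA) (lactM HX) (ractM HX).
by rewrite -!(lractA HX).
Qed.

Lemma thetaF_rep : bimod_rep st lact ract xst ipf Df thetaF rhof.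
Proof.
split.
- exact: rhof_star.
- move=> x; split; first exact: thetaF_lin_on.
  by exists (thetaF (xst x)) => phi psi; exact: thetaF_star.
- exact: thetaF_xlin.
- exact: thetaF_star.
- exact: thetaF_mod.
Qed.

Lemma thetaF_cyc a b x :
  F (ract (lact a x) b) = ipf (thetaF x (rhof b (pi 1))) (rhof (st a) (pi 1)).
Proof. by rewrite !(gns_rho HGNS) !mulr1 thetaF_spec' (st_invol HA). Qed.

Section Uniq.
Variables (H : lmodType C) (ip : H -> H -> C) (D : H -> Prop)
  (theta : X -> H -> H) (rho : A -> H -> H) (psi : H).
Hypothesis hH : hilbert ip.
Hypothesis hD : dense_subspace ip D.
Hypothesis hrep : bimod_rep st lact ract xst ip D theta rho.
Hypothesis hpsi : D psi.
Hypothesis hcyc : forall h, D h <-> exists a, h = rho a psi.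
Hypothesis hf : forall a, f a = ip (rho a psi) psi.
Hypothesis hF : forall a b x, F (ract (lact a x) b) = ip (theta x (rho b psi)) (rho (st a) psi).

Let hrho := brep_rho hrep.
Let pH a := rho a psi.

Lemma pHlin c a b : pH (c *: a + b) = c *: pH a + pH b.
Proof. by have := rep_linA hrho c a b hpsi. Qed.

Lemma DpH a : D (pH a).
Proof. by have := rep_stable hrho a hpsi. Qed.

Lemma pH_ip a b : ip (pH a) (pH b) = ipf (pi a) (pi b).
Proof.
rewrite (gns_ip HGNS) hf.
have := rep_mul hrho (st b) a hpsi; rewrite -/(pH a) => ->.
have := rep_star hrho (st b) (DpH a) hpsi; rewrite (st_invol HA) => ->.
by [].
Qed.

Lemma nrm_pH a : nrm ip (pH a) = nrm ipf (pi a).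
Proof. by rewrite /nrm pH_ip. Qed.

Lemma dense_pH : dense_img ip pH.
Proof.
move=> h e e0; have eC : (0 : C) < (e%:C)%C by rewrite ltcR.
have [d [Dd hd]] := dsdense hD h eC.
have [a da] := (hcyc d).1 Dd.
by exists a; move: hd; rewrite (sqdist_nrm hH) ltcR da.
Qed.

Lemma uniqH v w : (forall a, ip (pH a) v = ip (pH a) w) -> v = w.
Proof. exact: (uniq_eq hH dense_pH). Qed.

Lemma U_ex x : exists xi, forall a, ip (pH a) xi = ipf (pi a) x.
Proof.
apply: (riesz hH (p := pH) (L := fun a => ipf (pi a) x) (M := nrm ipf x)).
- exact: pHlin.
- by move=> c a b; rewrite (gns_lin HGNS) (ip_linl Hhf).
- by have := nrm_ge0 Hhf x.
- by move=> a; rewrite nrm_pH mulrC; apply: (CS Hhf).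
Qed.

Lemma V_ex y : exists eta, forall a, ipf (pi a) eta = ip (pH a) y.
Proof.
apply: (riesz Hhf (p := pi) (L := fun a => ip (pH a) y) (M := nrm ip y)).
- exact: gns_lin HGNS.
- by move=> c a b; rewrite pHlin (ip_linl hH).
- by have := nrm_ge0 hH y.
- by move=> a; rewrite -nrm_pH mulrC; apply: (CS hH).
Qed.

Definition U (x : Hf) : H :=
  epsilon (inhabits 0) (fun xi => forall a, ip (pH a) xi = ipf (pi a) x).
Definition V (y : H) : Hf :=
  epsilon (inhabits 0) (fun eta => forall a, ipf (pi a) eta = ip (pH a) y).

Lemma U_spec x a : ip (pH a) (U x) = ipf (pi a) x.
Proof. exact: (epsilon_spec (inhabits 0) _ (U_ex x) a). Qed.
Lemma V_spec y a : ipf (pi a) (V y) = ip (pH a) y.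
Proof. exact: (epsilon_spec (inhabits 0) _ (V_ex y) a). Qed.

Lemma U_pi b : U (pi b) = pH b.
Proof. by apply: uniqH => a; rewrite U_spec pH_ip. Qed.

Lemma U_lin c x y : U (c *: x + y) = c *: U x + U y.
Proof.
apply: uniqH => a.
by rewrite U_spec (ipDr hH) (ipZr hH) !U_spec (ipDr Hhf) (ipZr Hhf).
Qed.

Lemma U_surj y : U (V y) = y.
Proof. by apply: uniqH => a; rewrite U_spec V_spec. Qed.

Lemma U_bound x : nrm ip (U x) <= 7 * nrm ipf x.
Proof.
apply: (riesz_bound hH (L := fun a => ipf (pi a) x) dense_pH).
- by have := nrm_ge0 Hhf x.
- by move=> a; rewrite nrm_pH mulrC; apply: (CS Hhf).
- exact: U_spec.
Qed.

Lemma U_isom x y : ip (U x) (U y) = ipf x y.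
Proof.
pose G w := ip (U x) (U w) - ipf x w.
have G0 b : G (pi b) = 0.
  by rewrite /G U_pi (ip_swap hH) U_spec (ip_swap Hhf x) conjK subrr.
have UB := linB U_lin.
have Gs b : G (y - pi b) = G y.
  have : G (y - pi b) = G y - G (pi b) by rewrite /G UB (ipBr hH) (ipBr Hhf); ring.
  by rewrite G0 subr0.
have Gb w : re (G w) ^+ 2 + im (G w) ^+ 2 <= 100 * (nrm ipf x * nrm ipf w).
  have c1 := CS hH (U x) (U w).
  have c2 := CS Hhf x w.
  have b1 := U_bound x; have b2 := U_bound w.
  have n1 := nrm_ge0 hH (U x); have n2 := nrm_ge0 hH (U w).
  have n3 := nrm_ge0 Hhf x; have n4 := nrm_ge0 Hhf w.
  have p1 : nrm ip (U x) * nrm ip (U w) <= (7 * nrm ipf x) * (7 * nrm ipf w).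
    by apply: ler_pM.
  rewrite /G; cx.
  move: c1 c2 p1 n3 n4; move: (re (ip (U x) (U w))) (im (ip (U x) (U w))) (re (ipf x w)) (im (ipf x w)).
  move: (nrm ip (U x) * nrm ip (U w)) (nrm ipf x) (nrm ipf w) => P nx nw a1 b1' a2 b2' c1 c2 p1 n3 n4.
  have e1 : (a1 - a2) ^+ 2 = 2 * a1 ^+ 2 + 2 * a2 ^+ 2 - (a1 + a2) ^+ 2 by ring.
  have e2 : (b1' - b2') ^+ 2 = 2 * b1' ^+ 2 + 2 * b2' ^+ 2 - (b1' + b2') ^+ 2 by ring.
  have e3 : 7 * nx * (7 * nw) = 49 * (nx * nw) by ring.
  have := sqr_ge0 (a1 + a2); have := sqr_ge0 (b1' + b2').
  rewrite e3 in p1; lra.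
have Gy0 : re (G y) ^+ 2 + im (G y) ^+ 2 = 0.
  apply: (@small_zero _ _ (100 * nrm ipf x)).
  - by rewrite mulr_ge0 // (nrm_ge0 Hhf).
  - by rewrite addr_ge0 // sqr_ge0.
  move=> e e0; have [b hb] := dense_pi y e0.
  rewrite -(Gs b); apply: (le_trans (Gb _)).
  rewrite -mulrA ler_wpM2l //; rewrite ler_wpM2l ?(nrm_ge0 Hhf) //; exact: ltW.
have ha : re (G y) ^+ 2 = 0.
  by have := sqr_ge0 (re (G y)); have := sqr_ge0 (im (G y)); lra.
have hb : im (G y) ^+ 2 = 0.
  by have := sqr_ge0 (re (G y)); have := sqr_ge0 (im (G y)); lra.
have : G y = 0.
  by apply: cplx_eq; [move/eqP: ha | move/eqP: hb]; rewrite sqrf_eq0 => /eqP.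
by rewrite /G => /eqP; rewrite subr_eq0 => /eqP.
Qed.

Lemma U_final : exists U : Hf -> H,
         unitary ipf ip U /\
         U (pi 1) = psi /\
         (forall h, D h <-> exists g, GNS_domain pi g /\ h = U g) /\
         (forall a g, GNS_domain pi g -> rho a (U g) = U (rhof a g)) /\
         (forall x g, GNS_domain pi g -> theta x (U g) = U (thetaF x g)).
Proof.
exists U; split; [split|split; [|split; [|split]]].
- exact: U_lin.
- exact: U_isom.
- by move=> y; exists (V y); exact: U_surj.
- by rewrite U_pi /pH; have := rep_nondeg hrho hpsi.
- move=> h; split.
    by case/hcyc => a ->; exists (pi a); split; [exists a | rewrite U_pi].
  by case=> g [[a ->] ->]; rewrite U_pi; exact: DpH.
- move=> a _ [b ->]; rewrite (gns_rho HGNS) !U_pi /pH.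
  by have := rep_mul hrho a b hpsi.
- move=> x _ [b ->]; rewrite U_pi; apply: uniqH => a.
  by rewrite U_spec thetaF_spec /pH (ip_swap hH) hF (st_invol HA).
Qed.


End Uniq.

Lemma main_all : exists thetaF : X -> Hf -> Hf,
    bimod_rep st lact ract xst ipf (GNS_domain pi) thetaF rhof /\
    (forall a b x, F (ract (lact a x) b) = ipf (thetaF x (rhof b (pi 1))) (rhof (st a) (pi 1))) /\
    (forall (H : lmodType (complex R)) (ip : H -> H -> complex R) (D : H -> Prop)
            (theta : X -> H -> H) (rho : A -> H -> H) (psi : H),
       hilbert ip -> dense_subspace ip D ->
       bimod_rep st lact ract xst ip D theta rho ->
       D psi ->
       (forall h, D h <-> exists a, h = rho a psi) ->
       (forall a, f a = ip (rho a psi) psi) ->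
       (forall a b x, F (ract (lact a x) b) = ip (theta x (rho b psi)) (rho (st a) psi)) ->
       exists U : Hf -> H,
         unitary ipf ip U /\
         U (pi 1) = psi /\
         (forall h, D h <-> exists g, GNS_domain pi g /\ h = U g) /\
         (forall a g, GNS_domain pi g -> rho a (U g) = U (rhof a g)) /\
         (forall x g, GNS_domain pi g -> theta x (U g) = U (thetaF x g))).
Proof.
exists thetaF; split; first exact: thetaF_rep.
split; first exact: thetaF_cyc.
move=> H ip D theta rho psi hH hD hrep hpsi hcyc hf hF.
exact: (U_final hH hD hrep hpsi hcyc hf hF).
Qed.

End Main.

Unset Implicit Arguments.

Theorem theorem5p1 (R : realType)
  (A : algType (complex R)) (st : A -> A) (HA : star_algebra st)
  (X : lmodType (complex R)) (lact : A -> X -> X) (ract : X -> A -> X) (xst : X -> X)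
  (HX : star_bimodule st lact ract xst)
  (F : X -> complex R)
  (HFlin : forall (c : complex R) x y, F (c *: x + y) = c * F x + F y)
  (HFherm : forall x, F (xst x) = (F x)^*)
  (f : A -> complex R)
  (Hflin : forall (c : complex R) a b, f (c *: a + b) = c * f a + f b)
  (Hfpos : forall a, 0 <= f (st a * a))
  (Hbound : forall x, exists Cx : complex R, 0 < Cx /\
              forall a, `|F (lact (st a) x)| ^+ 2 <= Cx * f (st a * a))
  (Hf : lmodType (complex R)) (ipf : Hf -> Hf -> complex R)
  (pi : A -> Hf) (rhof : A -> Hf -> Hf) (HGNS : GNS st f ipf pi rhof) :
  exists thetaF : X -> Hf -> Hf,
    bimod_rep st lact ract xst ipf (GNS_domain pi) thetaF rhof /\
    (forall a b x, F (ract (lact a x) b) = ipf (thetaF x (rhof b (pi 1))) (rhof (st a) (pi 1))) /\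
    (forall (H : lmodType (complex R)) (ip : H -> H -> complex R) (D : H -> Prop)
            (theta : X -> H -> H) (rho : A -> H -> H) (psi : H),
       hilbert ip -> dense_subspace ip D ->
       bimod_rep st lact ract xst ip D theta rho ->
       D psi ->
       (forall h, D h <-> exists a, h = rho a psi) ->
       (forall a, f a = ip (rho a psi) psi) ->
       (forall a b x, F (ract (lact a x) b) = ip (theta x (rho b psi)) (rho (st a) psi)) ->
       exists U : Hf -> H,
         unitary ipf ip U /\
         U (pi 1) = psi /\
         (forall h, D h <-> exists g, GNS_domain pi g /\ h = U g) /\
         (forall a g, GNS_domain pi g -> rho a (U g) = U (rhof a g)) /\
         (forall x g, GNS_domain pi g -> theta x (U g) = U (thetaF x g))).
Proof.
by have := main_all HA HX HFlin HFherm Hbound HGNS.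
Qed.
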